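(* Let $P$ be an integer such that $P^2+4$ is square-free, and let $m\ge 0$ be an integer. Consider the equation $$\sigma_2(n)-n^2=V_{2m}(P,-1)\,n-V_{2m}(P,-1)^2+5$$ in positive integers $n$. Then every solution $n$ with $n>\big(|V_{2m}(P,-1)|+V_{2m}(P,-1)^2-5\big)^3$ is of one of the following forms (so all solutions not of these forms lie in the finite, computable range $n\le(|V_{2m}(P,-1)|+V_{2m}(P,-1)^2-5)^3$): (1) $n=V_{2k}(P,-1)\,V_{2k+2m}(P,-1)$ for some integer $k\ge 0$, with $V_{2k}(P,-1)$ and $V_{2k+2m}(P,-1)$ both prime; (2) $n=V_{2k}(P,-1)\,V_{2m-2k}(P,-1)$ for some integer $k$ with $0\le k\le m$ and $m\ne 2k$, with $V_{2k}(P,-1)$ and $V_{2m-2k}(P,-1)$ both prime.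
   Context: For a positive integer $n$ and $k\ge 0$, $\sigma_k(n)=\sum_{d\mid n,\ d>0} d^k$. For integers $P,Q$, the Lucas sequences are defined for $j\ge 0$ by $U_0(P,Q)=0$, $U_1(P,Q)=1$, $U_j(P,Q)=P\,U_{j-1}(P,Q)-Q\,U_{j-2}(P,Q)$ for $j>1$, and $V_0(P,Q)=2$, $V_1(P,Q)=P$, $V_j(P,Q)=P\,V_{j-1}(P,Q)-Q\,V_{j-2}(P,Q)$ for $j>1$. An integer is square-free if it is not divisible by the square of any prime. *)

(* Defs.v *)
From mathcomp Require Import all_boot all_order all_algebra.
Set Implicit Arguments. Unset Strict Implicit. Unset Printing Implicit Defensive.
Import Order.TTheory GRing.Theory Num.Theory.
Local Open Scope ring_scope.

Definition sigma (k n : nat) : nat := (\sum_(d <- divisors n) d ^ k)%N.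

Fixpoint lucasU (P Q : int) (j : nat) : int :=
  match j with
  | 0%N => 0
  | 1%N => 1
  | S ((S j') as j1) => P * lucasU P Q j1 - Q * lucasU P Q j'
  end.

Fixpoint lucasV (P Q : int) (j : nat) : int :=
  match j with
  | 0%N => 2
  | 1%N => P
  | S ((S j') as j1) => P * lucasV P Q j1 - Q * lucasV P Q j'
  end.

Definition squarefree_int (z : int) : Prop :=
  forall p : nat, prime p -> ~ ((p ^ 2)%:Z %| z)%Z.

Definition int_prime (z : int) : Prop := exists2 p : nat, prime p & z = p%:Z.

(* Main.v *)
Require Import Defs.
From mathcomp Require Import all_boot all_order all_algebra.
From mathcomp Require Import zify ring lra.
Import Order.TTheory GRing.Theory Num.Theory.

Lemma sigma_eq (n : nat) (l : seq nat) : 0 < n -> uniq l ->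
  (forall d, (d %| n) = (d \in l)) -> sigma 2 n = \sum_(d <- l) d ^ 2.
Proof.
move=> n0 ul hl; rewrite /sigma; apply: perm_big; apply: uniq_perm => //.
  exact: divisors_uniq.
by move=> d; rewrite -dvdn_divisors.
Qed.

Lemma sigma_prime p : prime p -> sigma 2 p = 1 + p ^ 2.
Proof.
move=> pp; have p1 := prime_gt1 pp.
rewrite (@sigma_eq p [:: 1; p]); first by rewrite !big_cons big_nil addn0.
- exact: prime_gt0.
- by rewrite /= inE andbT; lia.
move=> d; rewrite !inE; apply/idP/idP.
  by case/primeP: pp => _ /(_ d).
by case/orP => /eqP ->.
Qed.

Lemma sigma_prime2 p : prime p -> sigma 2 (p ^ 2) = 1 + p ^ 2 + p ^ 4.
Proof.
move=> pp; have p1 := prime_gt1 pp.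
rewrite (@sigma_eq (p ^ 2) [:: 1; p; p ^ 2]).
- by rewrite !big_cons big_nil addn0 -expnM addnA.
- by rewrite expn_gt0; lia.
- rewrite /= !inE andbT negb_or; apply/andP; split; [apply/andP; split|]; nia.
move=> d; rewrite !inE; apply/idP/idP.
  case/(dvdn_pfactor _ _ pp) => -[|[|[|k]]] // _ ->; by rewrite eqxx ?orbT.
by case/or3P => /eqP ->; rewrite ?dvd1n ?dvdnn // (expnS p 1) dvdn_mulr.
Qed.

Lemma sigma_pq p q : prime p -> prime q -> p != q -> sigma 2 (p * q) = 1 + p ^ 2 + q ^ 2 + (p * q) ^ 2.
Proof.
move=> pp qp pq; have p1 := prime_gt1 pp; have q1 := prime_gt1 qp.
rewrite (@sigma_eq (p * q) [:: 1; p; q; p * q]).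
- by rewrite !big_cons big_nil addn0 !addnA.
- nia.
- move/eqP: pq => pq; rewrite /= !inE andbT !negb_or.
  repeat (apply/andP; split); apply/eqP; nia.
move=> d; rewrite !inE; apply/idP/idP.
  move=> hd.
  have [pd|npd] := boolP (p %| d).
    move: hd; rewrite -(divnK pd) mulnC dvdn_pmul2l ?prime_gt0 // => h.
    case/primeP: qp => _ /(_ _ h) /orP [] /eqP -> /=.
      by rewrite muln1 eqxx !orbT.
    by rewrite eqxx !orbT.
  have cop : coprime d p.
    by rewrite coprime_sym prime_coprime.
  have h : d %| q by rewrite -(Gauss_dvdr q cop).
  by case/primeP: qp => _ /(_ _ h) /orP [] /eqP ->; rewrite eqxx ?orbT.
case/or4P => /eqP ->; [exact: dvd1n | exact: dvdn_mulr (dvdnn p) | exact: dvdn_mull (dvdnn q) | exact: dvdnn].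
Qed.

Lemma sigma_lb n a : 0 < n -> a %| n -> a != n -> n ^ 2 + a ^ 2 <= sigma 2 n.
Proof.
move=> n0 an nan; rewrite /sigma.
rewrite (big_rem n) ?divisors_id //=.
rewrite (big_rem a) /=; last first.
  by rewrite (mem_rem_uniq _ (divisors_uniq n)) !inE nan /= -dvdn_divisors.
rewrite addnA; exact: leq_addr.
Qed.

Local Open Scope ring_scope.

Lemma VSS (P : int) n : lucasV P (-1) n.+2 = P * lucasV P (-1) n.+1 + lucasV P (-1) n.
Proof. by rewrite /= mulN1r opprK. Qed.
Lemma USS (P : int) n : lucasU P (-1) n.+2 = P * lucasU P (-1) n.+1 + lucasU P (-1) n.
Proof. by rewrite /= mulN1r opprK. Qed.

Lemma step1 (P : int) n :
  2 * lucasV P (-1) n.+1 = P * lucasV P (-1) n + (P^+2+4) * lucasU P (-1) n /\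
  2 * lucasU P (-1) n.+1 = P * lucasU P (-1) n + lucasV P (-1) n.
Proof.
elim/ltn_ind: n => -[|[|n]] IH.
- rewrite /=; split; ring.
- rewrite /=; split; rewrite ?mulN1r ?opprK; ring.
- have [h1 h2] := IH n (leqW (ltnSn n)).
  have [h3 h4] := IH n.+1 (ltnSn _).
  have e1 : 2 * lucasV P (-1) n.+3 = P * (2 * lucasV P (-1) n.+2) + 2 * lucasV P (-1) n.+1.
    by rewrite VSS; ring.
  have e2 : 2 * lucasU P (-1) n.+3 = P * (2 * lucasU P (-1) n.+2) + 2 * lucasU P (-1) n.+1.
    by rewrite USS; ring.
  rewrite e1 e2 h3 h4 h1 h2 (VSS P n) (USS P n); split; ring.
Qed.



Lemma addV (P : int) i j :
  2 * lucasV P (-1) (i + j) = lucasV P (-1) i * lucasV P (-1) j + (P^+2+4) * lucasU P (-1) i * lucasU P (-1) j /\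
  2 * lucasU P (-1) (i + j) = lucasU P (-1) i * lucasV P (-1) j + lucasV P (-1) i * lucasU P (-1) j.
Proof.
elim: j => [|j [IH1 IH2]].
  by rewrite addn0 /=; split; ring.
rewrite addnS.
have [a1 a2] := step1 P (i + j).
have [b1 b2] := step1 P j.
have e1 : 2 * (2 * lucasV P (-1) (i + j).+1) = P * (2 * lucasV P (-1) (i+j)) + (P^+2+4) * (2 * lucasU P (-1) (i+j)).
  by rewrite a1; ring.
have e2 : 2 * (2 * lucasU P (-1) (i + j).+1) = P * (2 * lucasU P (-1) (i+j)) + (2 * lucasV P (-1) (i+j)).
  by rewrite a2; ring.
rewrite IH1 IH2 in e1 e2.
have f1 : 2 * (lucasV P (-1) i * lucasV P (-1) j.+1 + (P^+2+4) * lucasU P (-1) i * lucasU P (-1) j.+1)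
   = lucasV P (-1) i * (2 * lucasV P (-1) j.+1) + (P^+2+4) * lucasU P (-1) i * (2 * lucasU P (-1) j.+1) by ring.
have f2 : 2 * (lucasU P (-1) i * lucasV P (-1) j.+1 + lucasV P (-1) i * lucasU P (-1) j.+1)
   = lucasU P (-1) i * (2 * lucasV P (-1) j.+1) + lucasV P (-1) i * (2 * lucasU P (-1) j.+1) by ring.
rewrite b1 b2 in f1 f2.
split.
- have : 2 * (2 * lucasV P (-1) (i + j).+1) = 2 * (lucasV P (-1) i * lucasV P (-1) j.+1 + (P^+2+4) * lucasU P (-1) i * lucasU P (-1) j.+1).
    by rewrite e1 f1; ring.
  lia.
- have : 2 * (2 * lucasU P (-1) (i + j).+1) = 2 * (lucasU P (-1) i * lucasV P (-1) j.+1 + lucasV P (-1) i * lucasU P (-1) j.+1).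
    by rewrite e2 f2; ring.
  lia.
Qed.

Lemma normV (P : int) n :
  lucasV P (-1) n ^+ 2 - (P^+2+4) * lucasU P (-1) n ^+ 2 = 4 * (-1) ^+ n.
Proof.
elim: n => [|n IH]; first by rewrite /=; ring.
have [a1 a2] := step1 P n.
have : 4 * (lucasV P (-1) n.+1 ^+ 2 - (P^+2+4) * lucasU P (-1) n.+1 ^+ 2) =
   (2 * lucasV P (-1) n.+1) ^+ 2 - (P^+2+4) * (2 * lucasU P (-1) n.+1) ^+ 2 by ring.
rewrite a1 a2.
have -> : (P * lucasV P (-1) n + (P ^+ 2 + 4) * lucasU P (-1) n) ^+ 2 -
  (P ^+ 2 + 4) * (P * lucasU P (-1) n + lucasV P (-1) n) ^+ 2 =
  - 4 * (lucasV P (-1) n ^+ 2 - (P^+2+4) * lucasU P (-1) n ^+ 2) by ring.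
rewrite IH [(-1) ^+ n.+1]exprS => h.
lia.
Qed.


Lemma sq_le (a b : int) : 0 <= b -> a ^+ 2 <= b ^+ 2 -> a <= b.
Proof. move=> hb h; nia. Qed.
Lemma sq_lt (a b : int) : 0 <= b -> a ^+ 2 < b ^+ 2 -> a < b.
Proof. move=> hb h; nia. Qed.

Lemma parity (u w t : int) : u * (u + 2 * w) = 2 * t -> exists e, u = 2 * e.
Proof.
move=> h.
have := divz_eq u 2; set q := (u %/ 2)%Z; set r := (u %% 2)%Z => hu.
have r0 : 0 <= r by apply: modz_ge0.
have r2 : r < 2 by apply: ltz_pmod.
have [r1|r1] : r = 0 \/ r = 1 by lia.
  by exists q; rewrite hu r1; ring.
exfalso; rewrite r1 in hu; rewrite hu in h.
have : (q * 2 + 1) * (q * 2 + 1 + 2 * w) = 2 * (2 * q * q + 2 * q + q * 2 * w + w) + 1 by ring.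
lia.
Qed.

Definition W (P : int) k := lucasV P (-1) (2 * k).
Definition Z (P : int) k := lucasU P (-1) (2 * k).

Lemma Wadd P a b : 2 * W P (a + b) = W P a * W P b + (P^+2+4) * Z P a * Z P b.
Proof. by rewrite /W /Z mulnDr; case: (addV P (2*a) (2*b)). Qed.
Lemma Zadd P a b : 2 * Z P (a + b) = Z P a * W P b + W P a * Z P b.
Proof. by rewrite /W /Z mulnDr; case: (addV P (2*a) (2*b)). Qed.
Lemma Wnorm P k : W P k ^+ 2 - (P^+2+4) * Z P k ^+ 2 = 4.
Proof. by rewrite /W /Z normV exprM expr2 mulN1r opprK expr1n mulr1. Qed.
Lemma W0 P : W P 0 = 2. Proof. by []. Qed.
Lemma Z0 P : Z P 0 = 0. Proof. by []. Qed.
Lemma W1 P : W P 1 = P^+2 + 2.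
Proof. rewrite /W /=; ring. Qed.
Lemma Z1 P : Z P 1 = P.
Proof. rewrite /Z /=; ring. Qed.

Lemma Wsub P a b : (b <= a)%N -> W P a * W P b - (P^+2+4) * Z P a * Z P b = 2 * W P (a - b).
Proof.
move=> hba; have ea : a = ((a - b) + b)%N by rewrite subnK.
have h1 := Wadd P (a - b) b; have h2 := Zadd P (a - b) b; have h3 := Wnorm P b.
rewrite -ea in h1 h2.
have : 2 * (W P a * W P b - (P ^+ 2 + 4) * Z P a * Z P b) = 2 * (2 * W P (a - b)).
  have -> : 2 * (W P a * W P b - (P ^+ 2 + 4) * Z P a * Z P b) = (2 * W P a) * W P b - (P ^+ 2 + 4) * (2 * Z P a) * Z P b by ring.
  rewrite h1 h2.
  transitivity (W P (a - b) * (W P b ^+ 2 - (P ^+ 2 + 4) * Z P b ^+ 2)); first by ring.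
  by rewrite h3; ring.
lia.
Qed.


Lemma Wpos P k : 1 <= P -> 2 <= W P k /\ 0 <= Z P k /\ ((0 < k)%N -> P^+2 + 2 <= W P k /\ P <= Z P k).
Proof.
move=> hP; elim: k => [|k [h1 [h2 _]]]; first by rewrite W0 Z0.
have a1 := Wadd P k 1; have a2 := Zadd P k 1.
rewrite W1 Z1 addn1 in a1 a2.
have hP2 : 0 <= P ^+ 2 by nia.
have : W P k * (P ^+ 2 + 2) >= 2 * (P^+2+2) by nia.
have : (P ^+ 2 + 4) * Z P k * P >= 0 by nia.
have : Z P k * (P ^+ 2 + 2) >= 0 by nia.
have : W P k * P >= 2 * P by nia.
move=> *; split; [|split]; try lia.
Qed.

Lemma pell P (N : nat) (x z : int) : 1 <= P -> 0 <= x -> 0 <= z -> z <= N%:Z ->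
  x ^+ 2 - (P^+2+4) * z ^+ 2 = 4 -> exists k, x = W P k /\ z = Z P k.
Proof.
move=> hP; elim: N x z => [|N IH] x z hx hz hzN h.
  have z0 : z = 0 by lia.
  rewrite z0 in h; exists 0%N; rewrite W0 Z0 z0; split => //; nia.
have [z0|zpos] : z = 0 \/ 0 < z by lia.
  rewrite z0 in h; exists 0%N; rewrite W0 Z0 z0; split => //; nia.
have hPz : 0 <= P * z by nia.
have xgt : P * z < x.
  apply: sq_lt => //; nia.
have [zlt|zge] : z < P \/ P <= z by lia.
  exfalso.
  have xlt : x < P * z + 2.
    apply: sq_lt; first by nia.
    nia.
  have xe : x = P * z + 1 by lia.
  rewrite xe in h.
  have : (P * z + 1) ^+ 2 - (P ^+ 2 + 4) * z ^+ 2 = 2 * (P * z - 2 * z ^+ 2) + 1 by ring.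
  lia.
have [e he] : exists e, x - P * z = 2 * e.
  apply: (parity _ (P * z) (2 * z ^+ 2 + 2)).
  have -> : (x - P * z) * (x - P * z + 2 * (P * z)) = x ^+ 2 - (P ^+ 2 + 4) * z ^+ 2 + 4 * z ^+ 2 by ring.
  rewrite h; ring.
have epos : 0 < e by lia.
have key : (P ^+ 2 + 2) ^+ 2 - P ^+ 2 * (P ^+ 2 + 4) = 4 by ring.
have hx' : 0 <= P ^+ 2 * e + x - 2 * P * z.
  have : P * (P ^+ 2 + 4) * z <= (P ^+ 2 + 2) * x.
    apply: sq_le; first by nia.
    have : ((P ^+ 2 + 2) * x) ^+ 2 - (P * (P ^+ 2 + 4) * z) ^+ 2 = 4 * (P ^+ 2 + 4) * z ^+ 2 + 4 * (P ^+ 2 + 2) ^+ 2.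
      transitivity ((P ^+ 2 + 2) ^+ 2 * (x ^+ 2 - (P ^+ 2 + 4) * z ^+ 2) + 4 * (P ^+ 2 + 4) * z ^+ 2); first by ring.
      by rewrite h; ring.
    nia.
  have : 2 * (P ^+ 2 * e + x - 2 * P * z) = (P ^+ 2 + 2) * x - P * (P ^+ 2 + 4) * z.
    have xe : x = P * z + 2 * e by lia.
    rewrite xe; ring.
  lia.
have hz' : 0 <= z - P * e.
  have : P * x <= (P ^+ 2 + 2) * z.
    apply: sq_le; first by nia.
    have : ((P ^+ 2 + 2) * z) ^+ 2 - (P * x) ^+ 2 = 4 * z ^+ 2 - 4 * P ^+ 2.
      transitivity (- P ^+ 2 * (x ^+ 2 - (P ^+ 2 + 4) * z ^+ 2) + 4 * z ^+ 2); first by ring.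
      by rewrite h; ring.
    nia.
  have : 2 * (z - P * e) = (P ^+ 2 + 2) * z - P * x.
    have xe : x = P * z + 2 * e by lia.
    rewrite xe; ring.
  lia.
have hzN' : z - P * e <= N%:Z.
  have : 1 <= P * e by nia.
  move: hzN; rewrite -[N.+1]addn1 PoszD; lia.
have xe : x = P * z + 2 * e by lia.
have h' : (P ^+ 2 * e + x - 2 * P * z) ^+ 2 - (P ^+ 2 + 4) * (z - P * e) ^+ 2 = 4.
  rewrite -[in RHS]h xe; ring.
have [k [hk1 hk2]] := IH _ _ hx' hz' hzN' h'.
exists k.+1.
have a1 := Wadd P k 1; have a2 := Zadd P k 1.
rewrite W1 Z1 addn1 -hk1 -hk2 in a1 a2.
split.
  have : 2 * x = 2 * W P k.+1 by rewrite a1 xe; ring.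
  lia.
have : 2 * z = 2 * Z P k.+1 by rewrite a2 xe; ring.
lia.
Qed.


Lemma sqfree_nat (D R : nat) : (0 < D)%N -> (forall p, prime p -> ~~ (p ^ 2 %| D)%N) ->
  (D %| R ^ 2)%N -> (D %| R)%N.
Proof.
elim/ltn_ind: D R => D IH R D0 sqf hD.
have [D1|D1] : D = 1%N \/ (1 < D)%N by lia.
  by rewrite D1 dvd1n.
set p := pdiv D.
have pp : prime p by apply: pdiv_prime.
have pD : (p %| D)%N by apply: pdiv_dvd.
have p0 : (0 < p)%N by apply: prime_gt0.
have pR : (p %| R)%N.
  have : (p %| R ^ 2)%N := dvdn_trans pD hD.
  by rewrite Euclid_dvdX // => /andP[].
move: (divnK pD) (divnK pR); set D' := (D %/ p)%N; set R' := (R %/ p)%N => eD eR.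
have ncop : coprime p D'.
  rewrite prime_coprime //; apply/negP => hpD'.
  apply: (negP (sqf p pp)).
  by rewrite -eD (expnS p 1) expn1 mulnC dvdn_pmul2l.
have hD' : (D' %| R' ^ 2)%N.
  have e1 : (D = p * D')%N by rewrite -eD mulnC.
  have e2 : (R ^ 2 = p * (p * R' ^ 2))%N by rewrite -eR; lia.
  move: hD; rewrite e1 e2 dvdn_pmul2l // Gauss_dvdr //.
  by rewrite coprime_sym.
have D'0 : (0 < D')%N by rewrite divn_gt0 // dvdn_leq.
have D'lt : (D' < D)%N by rewrite ltn_Pdiv // prime_gt1.
have sqf' : forall q, prime q -> ~~ (q ^ 2 %| D')%N.
  move=> q qp; apply/negP => h; apply: (negP (sqf q qp)).
  by rewrite -eD dvdn_mulr.
have := IH D' D'lt R' D'0 sqf' hD'.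
by rewrite -eD -eR dvdn_pmul2r.
Qed.

Lemma sqfree_intdvd (D r : int) : 0 < D -> squarefree_int D -> (D %| r ^+ 2)%Z -> (D %| r)%Z.
Proof.
move=> D0 sqf; rewrite !dvdzE abszX => h.
apply: sqfree_nat => //; first by lia.
move=> p pp; apply/negP => hp; apply: (sqf p pp).
by rewrite dvdzE.
Qed.

Lemma classify P m (x y : int) : 1 <= P -> squarefree_int (P ^+ 2 + 4) -> (0 < m)%N ->
  1 <= x -> 1 <= y ->
  x ^+ 2 - W P m * x * y + y ^+ 2 = 4 - W P m ^+ 2 ->
  (exists k, x = W P k /\ y = W P (k + m)) \/ (exists k, y = W P k /\ x = W P (k + m)) \/
  (exists k, (k <= m)%N /\ x = W P k /\ y = W P (m - k)).
Proof.
move=> hP sqf m0 x1 y1 h.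
have [_ [_ hm]] := Wpos P m hP.
have [_ Zm1] := hm m0.
set c := W P m in h *.
set Zm := Z P m in Zm1 *.
set D := P ^+ 2 + 4 in sqf *.
have D0 : 0 < D by rewrite /D; nia.
have cn : c ^+ 2 - D * Zm ^+ 2 = 4 by apply: Wnorm.
set t := 2 * y - c * x.
have ht : t ^+ 2 = D * Zm ^+ 2 * (x ^+ 2 - 4).
  transitivity ((c ^+ 2 - 4) * (x ^+ 2 - 4) + 4 * (x ^+ 2 - c * x * y + y ^+ 2 - 4 + c ^+ 2)).
    rewrite /t; ring.
  have -> : x ^+ 2 - c * x * y + y ^+ 2 - 4 + c ^+ 2 = 0 by lia.
  have -> : c ^+ 2 - 4 = D * Zm ^+ 2 by lia.
  ring.
have : (Zm ^+ 2 %| t ^+ 2)%Z by rewrite ht; apply/dvdzP; exists (D * (x ^+ 2 - 4)); ring.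
rewrite dvdz_pexp2r // => /dvdzP [r hr].
have hr2 : r ^+ 2 = D * (x ^+ 2 - 4).
  have : Zm ^+ 2 * r ^+ 2 = Zm ^+ 2 * (D * (x ^+ 2 - 4)).
    by rewrite -exprMn mulrC -hr ht; ring.
  apply: mulfI; apply/negP => /eqP; nia.
have : (D %| r ^+ 2)%Z by rewrite hr2; apply/dvdzP; exists (x ^+ 2 - 4); ring.
move/(@sqfree_intdvd D r D0 sqf)/dvdzP => [s hs].
have hx4 : x ^+ 2 - D * s ^+ 2 = 4.
  have : D * (D * s ^+ 2) = D * (x ^+ 2 - 4) by rewrite -hr2 hs; ring.
  move/mulfI => h1; rewrite h1 ?gt_eqF //; ring.
have [k [hk1 hk2]] : exists k, x = W P k /\ `|s| = Z P k.
  apply: (pell P `|s|%N x `|s|) => //; first by lia.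
  by rewrite real_normK ?num_real.
have e2y : 2 * y = c * x + s * D * Zm by rewrite -hs -hr /t; ring.
have [s0|s0] : 0 <= s \/ s < 0 by lia.
  have ss : s = Z P k by rewrite -hk2 ger0_norm.
  left; exists k; split => //.
  have := Wadd P m k; rewrite -/c -/D -/Zm -hk1 -ss => ha.
  have : 2 * y = 2 * W P (k + m) by rewrite addnC ha e2y; ring.
  lia.
have ss : s = - Z P k by rewrite -hk2 ltr0_norm // opprK.
have [km|mk] := leqP k m.
  right; right; exists k; split => //; split => //.
  have := Wsub P m k km; rewrite -/c -/D -/Zm -hk1 => ha.
  have : 2 * y = 2 * W P (m - k) by rewrite -ha e2y ss; ring.
  lia.
right; left; exists (k - m)%N.
have := Wsub P k m (ltnW mk); rewrite -/c -/D -/Zm -hk1 => ha.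
split.
  have : 2 * y = 2 * W P (k - m) by rewrite -ha e2y ss; ring.
  lia.
by rewrite subnK // ltnW.
Qed.


Lemma cube_bound (c : int) : 3 <= c -> c ^+ 3 <= (`|c| + c ^+ 2 - 5) ^+ 3.
Proof. move=> hc. rewrite ger0_norm; last lia. apply: lerXn2r; rewrite ?nnegrE; nia. Qed.

Lemma iprime (z : int) (p : nat) : prime p -> p%:Z = z -> int_prime z.
Proof. by move=> pp e; exists p. Qed.

Lemma main_pos (P : int) (m : nat) : 1 <= P -> squarefree_int (P ^+ 2 + 4) ->
  forall n : nat, (0 < n)%N ->
    (sigma 2 n)%:Z - (n ^ 2)%:Z = W P m * n%:Z - W P m ^+ 2 + 5 ->
    (`|W P m| + W P m ^+ 2 - 5) ^+ 3 < n%:Z ->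
    (exists k : nat, n%:Z = W P k * W P (k + m) /\ int_prime (W P k) /\ int_prime (W P (k + m)))
    \/
    (exists k : nat, (k <= m)%N /\ m <> (2 * k)%N /\
        n%:Z = W P k * W P (m - k) /\ int_prime (W P k) /\ int_prime (W P (m - k))).
Proof.
move=> hP sqf n n0 heq hB.
have [c2 [_ hcm]] := Wpos P m hP.
set c := W P m in c2 hcm heq hB *.
have hB1 : 1 <= (`|c| + c ^+ 2 - 5) ^+ 3.
  rewrite ger0_norm; last lia.
  apply: exprn_ege1; nia.
have n2 : (1 < n)%N by lia.
set p := pdiv n.
have pp : prime p by apply: pdiv_prime.
have p1 : (1 < p)%N by apply: prime_gt1.
have pn : (p %| n)%N by apply: pdiv_dvd.
set a := (n %/ p)%N.
have ean : (a * p)%N = n by apply: divnK.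
have a0 : (0 < a)%N by rewrite divn_gt0 ?prime_gt0 // dvdn_leq.
have [c2'|c3] : c = 2 \/ 3 <= c by lia.
  have cm : c = W P m by [].
  exfalso.
  have [a1|a1] : a = 1%N \/ (1 < a)%N by lia.
    rewrite a1 mul1n in ean; rewrite -ean sigma_prime // in heq; rewrite -ean in n2.
    rewrite c2' in heq; lia.
  have [ap|anp] := boolP (prime a).
    have [eap|neap] := eqVneq a p.
      rewrite eap in ean; rewrite -ean mulnn sigma_prime2 // in heq.
      rewrite c2' in heq; nia.
    rewrite -ean mulnC sigma_pq // in heq; last by rewrite eq_sym.
    rewrite c2' in heq; nia.
  set q := pdiv a.
  have qp : prime q by apply: pdiv_prime.
  have qa : (q %| a)%N by apply: pdiv_dvd.
  set b := (a %/ q)%N.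
  have ebq : (b * q)%N = a by apply: divnK.
  have b1 : (1 < b)%N.
    have : (0 < b)%N by rewrite divn_gt0 ?prime_gt0 // dvdn_leq // ltnW.
    have [b1'|//] : b = 1%N \/ (1 < b)%N by lia.
    by move: anp; rewrite -ebq b1' mul1n qp.
  have pq : (p <= q)%N.
    apply: pdiv_min_dvd; first exact: prime_gt1.
    by rewrite -ean dvdn_mulr.
  have pb : (p <= b)%N.
    apply: pdiv_min_dvd => //.
    by rewrite -ean -ebq -mulnA dvdn_mulr.
  have lb := @sigma_lb n a n0 _ _.
  have an : (a %| n)%N by rewrite -ean dvdn_mulr.
  have nan : a != n by apply/eqP => e; move: ean; rewrite e; nia.
  have {}lb := lb an nan.
  rewrite c2' in heq.
  have hle : (a ^ 2 <= 2 * n + 1)%N by move: heq lb; clear; lia.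
  rewrite -ean in hle.
  have hap : (a <= 2 * p)%N by move: hle a1; clear; nia.
  have hpa : (p * p <= a)%N by rewrite -ebq; move: pq pb; clear; nia.
  have p2 : p = 2%N by move: hap hpa p1; clear; nia.
  have a4 : a = 4%N by move: hap hpa p2; clear; nia.
  rewrite a4 p2 in ean; rewrite -ean in heq.
  have s8 : sigma 2 8 = 85%N.
    by rewrite /sigma (_ : divisors 8 = [:: 1; 2; 4; 8])%N // !big_cons big_nil.
  by move: heq; rewrite s8; clear; lia.
have mpos : (0 < m)%N.
  case: (posnP m) => // m0; exfalso.
  by move: c3; rewrite /c m0 W0.
have hcb := @cube_bound c c3.
have hc2 : c <= c ^+ 2 by move: c3; clear; nia.
have hc3 : c ^+ 2 <= c ^+ 3 by move: c3; clear; nia.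
set B := (`|c| + c ^+ 2 - 5) ^+ 3 in hB hcb.
have [a1|a1] : a = 1%N \/ (1 < a)%N by lia.
  exfalso.
  rewrite a1 mul1n in ean; rewrite -ean sigma_prime // in heq; rewrite -ean in hB.
  have : p%:Z < c by move: heq c3; clear; nia.
  lia.
have [ap|anp] := boolP (prime a).
  have [eap|neap] := eqVneq a p.
    exfalso.
    rewrite eap in ean; rewrite -ean mulnn sigma_prime2 // in heq; rewrite -ean mulnn in hB.
    have : (p ^ 2)%N%:Z <= c ^+ 2 by move: heq c3; clear; nia.
    lia.
  have hxy : p%:Z ^+ 2 - c * p%:Z * a%:Z + a%:Z ^+ 2 = 4 - c ^+ 2.
    by move: heq; rewrite -ean mulnC sigma_pq // 1?eq_sym //; clear; lia.
  have x1 : 1 <= p%:Z by lia.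
  have y1 : 1 <= a%:Z by lia.
  have en : n%:Z = p%:Z * a%:Z by rewrite -ean PoszM mulrC.
  case: (@classify P m p%:Z a%:Z hP sqf mpos x1 y1 hxy) => [[k [hk1 hk2]]|[[k [hk1 hk2]]|[k [km [hk1 hk2]]]]].
  - left; exists k; rewrite en -hk1 -hk2; split => //.
    by split; [exists p | exists a].
  - left; exists k; rewrite en -hk1 -hk2 mulrC; split => //.
    by split; [exists a | exists p].
  - right; exists k; split => //; split.
      move=> mk; move/eqP: neap; apply; apply/eqP.
      have : (m - k)%N = k by lia.
      by move=> e; move: hk2; rewrite e -hk1 => /eqP; rewrite eqz_nat.
    rewrite en -hk1 -hk2; split => //.
    by split; [exists p | exists a].
exfalso.
set q := pdiv a.
have qp : prime q by apply: pdiv_prime.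
have qa : (q %| a)%N by apply: pdiv_dvd.
set b := (a %/ q)%N.
have ebq : (b * q)%N = a by apply: divnK.
have b1 : (1 < b)%N.
  have : (0 < b)%N by rewrite divn_gt0 ?prime_gt0 // dvdn_leq // ltnW.
  have [b1'|//] : b = 1%N \/ (1 < b)%N by lia.
  by move: anp; rewrite -ebq b1' mul1n qp.
have pq : (p <= q)%N.
  apply: pdiv_min_dvd; first exact: prime_gt1.
  by rewrite -ean dvdn_mulr.
have pb : (p <= b)%N.
  apply: pdiv_min_dvd => //.
  by rewrite -ean -ebq -mulnA dvdn_mulr.
have an : (a %| n)%N by rewrite -ean dvdn_mulr.
have nan : a != n by apply/eqP => e; move: ean; rewrite e; move: p1 n0; clear; nia.
have lb := @sigma_lb n a n0 an nan.
have hle : (a ^ 2)%N%:Z <= c * n%:Z by move: heq lb c3; clear; nia.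
have hpa : (p * p <= a)%N by rewrite -ebq; move: pq pb; clear; nia.
have en : n%:Z = a%:Z * p%:Z by rewrite -ean PoszM.
rewrite en in hle hB.
have hap : a%:Z <= c * p%:Z by move: hle a1; clear; nia.
have hpc : p%:Z <= c by move: hap hpa p1; clear; nia.
have : a%:Z * p%:Z <= c ^+ 3 by move: hap hpc p1 c3; clear; nia.
lia.
Qed.



Lemma Vneg (P : int) j : lucasV (- P) (-1) j = (-1) ^+ j * lucasV P (-1) j.
Proof.
elim/ltn_ind: j => -[|[|j]] IH.
- by rewrite /= expr0 mul1r.
- by rewrite /= expr1 mulN1r.
- rewrite !VSS (IH j (leqW (ltnSn j))) (IH j.+1 (ltnSn _)) !exprS; ring.
Qed.

Lemma Wabs (P : int) k : lucasV P (-1) (2 * k) = W `|P| k.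
Proof.
rewrite /W; have [hP|hP] := lerP 0 P.
  by rewrite ger0_norm.
by rewrite ltr0_norm // Vneg exprM expr2 mulN1r opprK expr1n mul1r.
Qed.

Theorem theorem1p6 (P : int) (m : nat) :
  squarefree_int (P ^+ 2 + 4) ->
  forall n : nat, (0 < n)%N ->
    (sigma 2 n)%:Z - (n ^ 2)%:Z =
      lucasV P (-1) (2 * m) * n%:Z - lucasV P (-1) (2 * m) ^+ 2 + 5 ->
    (`|lucasV P (-1) (2 * m)| + lucasV P (-1) (2 * m) ^+ 2 - 5) ^+ 3 < n%:Z ->
    (exists k : nat,
        n%:Z = lucasV P (-1) (2 * k) * lucasV P (-1) (2 * k + 2 * m) /\
        int_prime (lucasV P (-1) (2 * k)) /\
        int_prime (lucasV P (-1) (2 * k + 2 * m)))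
    \/
    (exists k : nat, (k <= m)%N /\ m <> (2 * k)%N /\
        n%:Z = lucasV P (-1) (2 * k) * lucasV P (-1) (2 * m - 2 * k) /\
        int_prime (lucasV P (-1) (2 * k)) /\
        int_prime (lucasV P (-1) (2 * m - 2 * k))).
Proof.
move=> sqf n n0 heq hB.
have P0 : P != 0.
  apply/eqP => P0; apply: (sqf 2%N) => //.
  by rewrite P0.
have hPa : 1 <= `|P| by move: P0; clear; lia.
have sqfa : squarefree_int (`|P| ^+ 2 + 4) by rewrite real_normK ?num_real.
rewrite !Wabs in heq hB.
case: (@main_pos `|P| m hPa sqfa n n0 heq hB) => [[k [h1 [h2 h3]]]|[k [h1 [h2 [h3 [h4 h5]]]]]].
  by left; exists k; rewrite -mulnDr !Wabs.
by right; exists k; rewrite -mulnBr !Wabs.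
Qed.
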